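(* Let $a,b$ be positive integers with $1<b/a\le 2$, and let $c$ be the remainder upon division of $a$ by $b-a$ (so $0\le c<b-a$). Let $V=\langle 1,u^c,u^{b-a}\rangle\subset S_{b-a}$. Then $\mu_V(W)\ge b/a$ for every nonzero linear subspace $W\subset S_{a-1}$.
   Context: Over $\mathbb{C}$, $S_a$ denotes the space of polynomials in one variable $u$ of degree at most $a$. For subspaces $V,W$, $V\cdot W$ is the span of products $fg$ ($f\in V$, $g\in W$), and for nonzero $W\subset S_{a-1}$, $\mu_V(W)=\dim(V\cdot W)/\dim W$. *)

(* Defs.v *)
From HB Require Import structures.
From mathcomp Require Import all_boot all_order all_algebra.
Set Implicit Arguments. Unset Strict Implicit. Unset Printing Implicit Defensive.
Import Order.TTheory GRing.Theory Num.Theory.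
Local Open Scope ring_scope.

(* S_k = polynomials of degree at most k = {poly_(k.+1) F} (size <= k+1),
   a finite dimensional vector space (qpoly.v). *)
Notation S F k := {poly_(k.+1) F}.

(* The product V . W of subspaces V of {poly_m F} and W of {poly_n F}:
   the span of all products f*g, f in V, g in W, viewed inside
   {poly_(m+n).-1 F} (polynomials of degree at most (m-1)+(n-1)).
   By bilinearity it is spanned by the products of basis vectors. *)
Definition prodsp (F : fieldType) (m n : nat)
    (V : {vspace {poly_m F}}) (W : {vspace {poly_n F}})
    : {vspace {poly_(m + n).-1 F}} :=
  <<[seq npolyp (m + n).-1 (val f * val g) | f <- vbasis V, g <- vbasis W]>>%VS.

Definition mu (F : fieldType) (m n : nat)
    (V : {vspace {poly_m F}}) (W : {vspace {poly_n F}}) : rat :=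
  (\dim (prodsp V W))%:R / (\dim W)%:R.

Definition Vsp (F : fieldType) (c k : nat) : {vspace S F k} :=
  <<[:: npolyp k.+1 1; npolyp k.+1 'X^c; npolyp k.+1 'X^k]>>%VS.

(* Main.v *)
Require Import Defs.
From HB Require Import structures.
From mathcomp Require Import all_boot all_order all_algebra.
From Stdlib Require Import Lia ClassicalEpsilon.
Import Order.TTheory GRing.Theory Num.Theory.
Set Implicit Arguments. Unset Strict Implicit. Unset Printing Implicit Defensive.
Ltac tolia := intros; repeat match goal with
 | H : is_true (~~ (_ <= _))%N |- _ => rewrite -ltnNge in H
 | H : is_true (~~ (_ < _))%N |- _ => rewrite -leqNgt in H
 | H : (_ <= _)%N = false |- _ => move/negbT: H => H
 | H : (_ <= _)%N = true |- _ => move/ssrnat.leP: H => H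
 | H : (_ < _)%N = true |- _ => move/ssrnat.ltP: H => H
 | H : (_ < _)%N = false |- _ => move/negbT: H => H
 | H : is_true (_ <= _)%N |- _ => move/ssrnat.leP: H => H
 | H : is_true (_ < _)%N |- _ => move/ssrnat.ltP: H => H
 | H : is_true (_ == _)%N |- _ => move/eqP: H => H
 | |- is_true (_ <= _)%N => apply/ssrnat.leP
 | |- is_true (_ < _)%N => apply/ssrnat.ltP
 | |- is_true (_ == _)%N => apply/eqP
 end; unfold addn, subn, muln, addn_rec, subn_rec, muln_rec in *; nia.

Lemma bimp0 (b1 b2 : bool) : (b1 -> b2) -> (b1 <= b2)%N.
Proof. by case: b1; case: b2 => // ->. Qed.

Lemma sum_part (f : nat -> nat) k n :
  \sum_(e < n * k) f e = \sum_(r < k) \sum_(j < n) f (r + j * k).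
Proof.
elim: n => [|n IH].
  by rewrite mul0n big_ord0 big1 // => r _; rewrite big_ord0.
rewrite mulSnr big_split_ord /= IH.
rewrite [RHS](eq_bigr (fun r : 'I_k => \sum_(j < n) f (r + j * k) + f (r + n * k))); last first.
  by move=> r _; rewrite big_ord_recr.
rewrite big_split /=; congr (_ + _).
by apply: eq_bigr => r _; rewrite addnC.
Qed.

Lemma sum_extend (f : nat -> nat) m M :
  (m <= M)%N -> (forall e, (m <= e)%N -> f e = 0) ->
  \sum_(e < m) f e = \sum_(e < M) f e.
Proof.
move=> hmM hf; rewrite (big_ord_widen M f hmM) big_mkcond /=.
by apply: eq_bigr => i _; case: ifP => // /negbT; rewrite -leqNgt => /hf ->.
Qed.

Lemma sum_lt h N : (h <= N)%N -> \sum_(j < N) (j < h : nat) = h.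
Proof.
move=> hN; rewrite -(big_mkord xpredT (fun j => (j < h : nat))).
rewrite (@big_cat_nat _ _ _ h 0 N) //=.
have -> : \sum_(h <= i < N) (i < h : nat) = 0.
  by rewrite big_nat_cond big1 // => i /andP[/andP[hi _] _]; rewrite ltnNge hi.
have -> : \sum_(0 <= i < h) (i < h : nat) = \sum_(0 <= i < h) 1.
  by rewrite big_nat_cond [RHS]big_nat_cond; apply: eq_bigr => i /andP[/andP[_ ->] _].
by rewrite sum_nat_const_nat subn0 muln1 addn0.
Qed.

Lemma seq_lemma (p s : nat -> bool) :
  (forall j, p j -> s j) -> (forall j, p j -> s j.+1) ->
  forall n, (\sum_(j < n.+1) p j + (0 < \sum_(j < n.+1) p j) <= \sum_(j < n.+1) s j + p n)%N.
Proof.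
move=> h0 h1; elim=> [|n IH].
  rewrite !big_ord1; case: (p 0) (h0 0) => //=; case: (s 0) => //; by move=> /(_ isT).
rewrite (big_ord_recr n.+1 (fun j => (p j : nat))) (big_ord_recr n.+1 (fun j => (s j : nat))) /=.
set X := \sum_(i < n.+1) p i in IH *; set Y := \sum_(i < n.+1) s i in IH *.
have hpn : p n -> (0 < X)%N.
  move=> hp; rewrite /X big_ord_recr /= hp; by rewrite addn1.
have hz : (0 < X + p n.+1)%N = (0 < X)%N || p n.+1.
  by case: (p n.+1); rewrite ?addn0 ?addn1 ?orbT ?orbF.
rewrite hz.
move: IH hpn (h0 n.+1) (h1 n).
case: (p n); case: (p n.+1); case: (s n.+1); case: (posnP X) => hX /= IH hpn H1 H2;
  try (by have := H1 isT); try (by have := H2 isT); try (by have := hpn isT; rewrite hX); tolia.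
Qed.

Lemma sum_rot (g : nat -> nat) k t : (0 < k)%N ->
  \sum_(r < k) g ((r + t) %% k) = \sum_(r < k) g r.
Proof.
move=> hk.
pose h (r : 'I_k) : 'I_k := Ordinal (ltn_pmod (r + t) hk).
have hinj : injective h.
  move=> x y /(congr1 val) /= /eqP; rewrite eqn_modDr !modn_small // => /eqP.
  exact: val_inj.
by rewrite [RHS](reindex_inj hinj).
Qed.

Definition Ssum (a c k : nat) (P : nat -> bool) (s : nat) : bool :=
  [|| (s < a)%N && P s, [&& (c <= s)%N, (s - c < a)%N & P (s - c)%N]
    | [&& (k <= s)%N, (s - k < a)%N & P (s - k)%N]].

Section Comb.
Variables (a k : nat) (P : nat -> bool).
Hypotheses (hk : (0 < k)%N) (hka : (k <= a)%N) (supp : forall e, P e -> (e < a)%N).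

Let c := (a %% k)%N.
Let q := (a %/ k)%N.
Let N := a.+2.
Let S := Ssum a c k P.
Definition dd r := \sum_(j < N) P (r + j * k)%N.
Definition mm r := \sum_(j < N) S (r + j * k)%N.

Lemma aqc : a = (q * k + c)%N.
Proof. exact: divn_eq. Qed.
Lemma ck : (c < k)%N.
Proof. exact: ltn_pmod. Qed.
Lemma q1 : (0 < q)%N.
Proof. by rewrite divn_gt0. Qed.
Lemma qa : (q <= a)%N.
Proof. exact: leq_div. Qed.

Lemma suppS s : S s -> (s < a + k)%N.
Proof.
have := ck; rewrite /S /Ssum => hc.
case/or3P => [/andP [h _]|/and3P [h1 h2 _]|/and3P [h1 h2 _]]; tolia.
Qed.

Lemma d_le_h r : (r < k)%N -> (dd r <= q + (r < c))%N.
Proof.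
move=> hr; rewrite -(@sum_lt (q + (r < c)) N); last first.
  have := qa; rewrite /N; case: (r < c)%N => /=; tolia.
apply: leq_sum => j _; apply: bimp0 => /supp.
have := aqc; have := ck; case: (ltnP r c) => hrc /=; tolia.
Qed.

Lemma i_bound r : (dd r + (0 < dd r) <= mm r)%N.
Proof.
have := @seq_lemma (fun j => P (r + j * k)%N) (fun j => S (r + j * k)%N).
move=> /(_ _ _ a.+1); rewrite /dd /mm /N.
have -> : P (r + a.+1 * k)%N = false.
  apply/negP => /supp; have := hk; tolia.
rewrite addn0; apply.
  by move=> j hj; rewrite /S /Ssum (supp hj) hj.
move=> j hj; rewrite /S /Ssum; apply/or3P; apply: Or33.
have e : (r + j.+1 * k - k = r + j * k)%N by rewrite mulSnr addnA addnK.
by rewrite e (supp hj) hj mulSnr addnA leq_addl.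
Qed.

Lemma sig_val r : (r < k)%N ->
  ((r + (k - c)) %% k = if (c <= r)%N then r - c else r + (k - c))%N.
Proof.
move=> hr; have hc := ck; case: ifP => h.
  have -> : (r + (k - c) = (r - c) + k)%N by tolia.
  rewrite modnDr modn_small //; tolia.
rewrite modn_small //; move/negbT: h; tolia.
Qed.

Lemma ii_bound r : (r < k)%N -> (dd ((r + (k - c)) %% k) <= mm r)%N.
Proof.
move=> hr; rewrite sig_val //; have hc := ck; rewrite /dd /mm.
case: ifP => h.
  apply: leq_sum => j _; apply: bimp0 => hj; rewrite /S /Ssum.
  have e : (r + j * k - c = r - c + j * k)%N by tolia.
  apply/or3P; apply: Or32; rewrite e hj (supp hj) /= ?andbT; tolia.
rewrite /N big_ord_recr /=.
have -> : P (r + (k - c) + a.+1 * k)%N = false.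
  apply/negP => /supp; have := hk; tolia.
rewrite addn0 [X in (_ <= X)%N]big_ord_recl /=.
apply: leq_trans _ (leq_addl _ _).
apply: leq_sum => j _; apply: bimp0 => hj; rewrite /S /Ssum.
have e : (r + bump 0 j * k - c = r + (k - c) + j * k)%N.
  by rewrite /bump /= add1n mulSnr; tolia.
apply/or3P; apply: Or32; rewrite e hj (supp hj) /= ?andbT.
rewrite /bump /= add1n mulSnr; tolia.
Qed.

Definition psi x := if dd x == (q + (x < c))%N then x else k.

Lemma pot r : (r < k)%N ->
  (psi r + (a + k) * dd r <= a * mm r + psi ((r + (k - c)) %% k))%N.
Proof.
move=> hr; set s := ((r + (k - c)) %% k)%N.
have hs : (s < k)%N by exact: ltn_pmod.
have H1 := i_bound r; have H2 := ii_bound hr; have H3 := d_le_h hr.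
have H4 := d_le_h hs; have sv := sig_val hr.
have E1 := aqc; have E2 := ck; have E3 := q1.
have hM1 := leq_mul (leqnn a) H1; have hM2 := leq_mul (leqnn a) H2.
rewrite /psi -/s in H2 hM2 sv *.
move: (dd r) (dd s) (mm r) H1 H2 H3 H4 hM1 hM2 => D E M H1 H2 H3 H4 hM1 hM2.
case: eqP => hD; case: eqP => hE.
- move: H1 hM1 H3 H4 hD hE sv; case: (ltnP r c) => hrc; case: (ltnP s c) => hsc /=;
  case: (posnP D) => hD0 //= H1 hM1 H3 H4 hD hE sv; tolia.
- move: H1 hM1 H3 H4 hD hE sv; case: (ltnP r c) => hrc; case: (ltnP s c) => hsc /=;
  case: (posnP D) => hD0 //= H1 hM1 H3 H4 hD hE sv; tolia.
- have hlt : (D < q + (r < c))%N by rewrite ltn_neqAle H3 andbT; apply/eqP.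
  have hk2 := leq_mul (leqnn k) hlt.
  move: H1 hM1 H3 H4 hD hE sv hlt hk2; case: (ltnP r c) => hrc; case: (ltnP s c) => hsc /=;
  case: (posnP D) => hD0 //= H1 hM1 H3 H4 hD hE sv hlt hk2; tolia.
- have hlt : (D < q + (r < c))%N by rewrite ltn_neqAle H3 andbT; apply/eqP.
  have hk2 := leq_mul (leqnn k) hlt.
  move: H1 hM1 H3 H4 hD hE sv hlt hk2; case: (ltnP r c) => hrc; case: (ltnP s c) => hsc /=;
  case: (posnP D) => hD0 //= H1 hM1 H3 H4 hD hE sv hlt hk2; tolia.
Qed.

Lemma comb : ((a + k) * \sum_(e < a) P e <= a * \sum_(s < a + k) S s)%N.
Proof.
have hNk : (a + k <= N * k)%N.
  rewrite /N; have := hk; tolia.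
have e1 : \sum_(e < a) P e = \sum_(e < N * k) P e.
  apply: (@sum_extend (fun e => (P e : nat)) a (N * k)); first by apply: leq_trans hNk; rewrite leq_addr.
  by move=> e he; case hP: (P e) => //; have := supp hP; rewrite ltnNge he.
have e2 : \sum_(s < a + k) S s = \sum_(s < N * k) S s.
  apply: (@sum_extend (fun e => (S e : nat)) (a + k) (N * k)) => // e he; case hP: (S e) => //.
  by have := suppS hP; rewrite ltnNge he.
rewrite e1 e2 (sum_part (fun e => (P e : nat))) (sum_part (fun e => (S e : nat))).
have key : (\sum_(r < k) (psi r + (a + k) * dd r) <=
    \sum_(r < k) (a * mm r + psi ((r + (k - c)) %% k)))%N.
  by apply: leq_sum => r _; apply: pot.
rewrite !big_split /= -!big_distrr /= (sum_rot psi _ hk) in key.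
by rewrite addnC leq_add2r in key.
Qed.

End Comb.

Local Open Scope ring_scope.
Definition pb (P : Prop) : bool := if excluded_middle_informative P then true else false.
Lemma pbP (P : Prop) : reflect P (pb P).
Proof. rewrite /pb; case: excluded_middle_informative => h; constructor; done. Qed.

Section LA.
Variable F : fieldType.
Variable n : nat.

Definition coefn (m : nat) (p : {poly_n F}) : F^o := (val p)`_m.
Fact coefn_lin m : linear (coefn m).
Proof. by move=> x p q; rewrite /coefn /= coefD coefZ. Qed.
HB.instance Definition _ m := GRing.isLinear.Build F {poly_n F} F^o _ (coefn m) (coefn_lin m).

Definition phi m : 'Hom({poly_n F}, F^o) := linfun (coefn m).

Lemma phiE m p : phi m p = (val p)`_m.
Proof. by rewrite lfunE. Qed.

Lemma dim_img_le1 m (U : {vspace {poly_n F}}) : (\dim (phi m @: U) <= 1)%N.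
Proof. by rewrite (leq_trans (dimvS (subvf _))) // dimvf. Qed.

Definition hd (U : {vspace {poly_n F}}) (e : nat) : bool :=
  pb (exists2 u, u \in U & size (val u) = e.+1).

End LA.

Section LA2.
Variable F : fieldType.
Variable n : nat.
Implicit Types U : {vspace {poly_n F}}.

Lemma hd_mono U V e : (U <= V)%VS -> hd U e -> hd V e.
Proof.
move=> sUV /pbP [u uU su]; apply/pbP; exists u => //; exact: (subvP sUV).
Qed.

Lemma bimp (b1 b2 : bool) : (b1 -> b2) -> (b1 <= b2)%N.
Proof. by case: b1; case: b2 => // ->. Qed.

Lemma coef_size_lead (p : {poly F}) m : size p = m.+1 -> p`_m != 0.
Proof.
move=> sp; have : lead_coef p != 0.
  by rewrite lead_coef_eq0 -size_poly_eq0 sp.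
by rewrite /lead_coef sp.
Qed.

Lemma L2 m U : (\sum_(e < m) hd U e <= \dim U)%N.
Proof.
elim: m U => [|m IH] U; first by rewrite big_ord0.
rewrite big_ord_recr /=.
case hm: (hd U m); last by rewrite addn0 IH.
move/pbP: hm => [u uU su].
set U' := (U :&: lker (phi F n m))%VS.
have h1 : (\sum_(e < m) hd U e <= \sum_(e < m) hd U' e)%N.
  apply: leq_sum => e _; apply: bimp.
  move/pbP => [w wU sw]; apply/pbP; exists w => //.
  rewrite memv_cap wU memv_ker phiE /= nth_default //.
  by rewrite sw; move: (ltn_ord e) => /ltnW.
rewrite -(limg_ker_dim (phi F n m) U) -/U' leq_add //.
  exact: leq_trans h1 (IH U').
rewrite lt0n dimv_eq0; apply/eqP => h0.
have : phi F n m u \in (phi F n m @: U)%VS by exact: memv_img.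
rewrite h0 memv0 phiE.
by rewrite (negbTE (coef_size_lead su)).
Qed.

Lemma L1 m U : (forall u, u \in U -> (size (val u) <= m)%N) ->
  (\dim U <= \sum_(e < m) hd U e)%N.
Proof.
elim: m U => [|m IH] U hU.
  rewrite big_ord0 leqn0 dimv_eq0 -subv0; apply/subvP => u uU.
  rewrite memv0; apply/eqP/val_inj => /=; apply/eqP.
  by rewrite -size_poly_eq0 -leqn0 hU.
set U' := (U :&: lker (phi F n m))%VS.
have hU' : (forall u, u \in U' -> (size (val u) <= m)%N).
  move=> u /memv_capP [uU]; rewrite memv_ker phiE => /eqP c0.
  have := hU u uU; rewrite leq_eqVlt ltnS => /orP [/eqP s1|//].
  by have := coef_size_lead s1; rewrite c0 eqxx.
have h1 : (\sum_(e < m) hd U' e <= \sum_(e < m) hd U e)%N.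
  apply: leq_sum => e _; apply: bimp.
  exact: (hd_mono (capvSl _ _)).
rewrite big_ord_recr /= -(limg_ker_dim (phi F n m) U) -/U'.
apply: leq_add; first exact: leq_trans (IH U' hU') h1.
case hm: (hd U m); first exact: dim_img_le1.
have hn : ~ (exists2 u, u \in U & size (val u) = m.+1) by move=> h; move: hm; rewrite /hd; case: pbP.
rewrite leqn0 dimv_eq0 -subv0; apply/subvP => w /memv_imgP [u uU ->].
rewrite memv0 phiE; apply/negPn/negP => hc.
apply: hn; exists u => //.
have := hU u uU; rewrite leq_eqVlt ltnS => /orP [/eqP //|sl].
by move: hc; rewrite nth_default ?eqxx.
Qed.
End LA2.

Section BL.
Variable F : fieldType.

Lemma npolyp_sum N I (r : seq I) (f : I -> {poly F}) :
  npolyp N (\sum_(i <- r) f i) = \sum_(i <- r) npolyp N (f i).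
Proof.
apply/npolyP => j; rewrite coefn_sum coef_npolyp coef_sum.
case: ifP => hj; last by rewrite big1 // => i _; rewrite coef_npolyp hj.
by apply: eq_bigr => i _; rewrite coef_npolyp hj.
Qed.

Lemma npolypZ N c (p : {poly F}) : npolyp N (c *: p) = c *: npolyp N p.
Proof.
apply/npolyP => j; rewrite coefZ !coef_npolyp coefZ.
by case: ifP; rewrite ?mulr0.
Qed.

Lemma val_sumZ n I (r : seq I) (c : I -> F) (f : I -> {poly_n F}) :
  val (\sum_(i <- r) c i *: f i) = \sum_(i <- r) c i *: val (f i).
Proof.
elim: r => [|x r IH]; first by rewrite !big_nil.
by rewrite !big_cons /= -IH.
Qed.

Lemma prodsp_mem m n (V : {vspace {poly_m F}}) (W : {vspace {poly_n F}}) f g :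
  f \in V -> g \in W -> npolyp (m + n).-1 (val f * val g) \in prodsp V W.
Proof.
move=> fV gW; rewrite (coord_vbasis fV) (coord_vbasis gW) !val_sumZ.
rewrite mulr_suml npolyp_sum; apply: memv_suml => i _.
rewrite mulr_sumr npolyp_sum; apply: memv_suml => j _.
rewrite -scalerAl -scalerAr !npolypZ; apply: memvZ; apply: memvZ.
apply: memv_span.
apply: (allpairs_f (fun f0 g0 : _ => npolyp (m + n).-1 (val f0 * val g0))).
  by apply: mem_nth; rewrite size_tuple.
by apply: mem_nth; rewrite size_tuple.
Qed.
End BL.

Section GL.
Variable F : fieldType.
Variables (a c k : nat).
Variable W : {vspace {poly_a F}}.

Lemma valK n (p : {poly F}) : (size p <= n)%N -> val (npolyp n p) = p.
Proof. exact: npolypK. Qed.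

Lemma glue1 al (v : {poly_(k.+1) F}) w e :
  v \in Vsp F c k -> val v = 'X^al -> w \in W -> size (val w) = e.+1 ->
  (al + e < k + a)%N -> hd (prodsp (Vsp F c k) W) (al + e).
Proof.
move=> vV hv wW sw hs; apply/pbP.
exists (npolyp (k.+1 + a).-1 (val v * val w)); first exact: prodsp_mem.
have w0 : val w != 0 by rewrite -size_poly_eq0 sw.
have sz : size (val v * val w) = (al + e).+1 by rewrite hv mulrC size_mulXn // sw addnS.
by rewrite valK // sz addSn.
Qed.

Lemma Vmem0 : npolyp k.+1 1 \in Vsp F c k.
Proof. by apply: memv_span; rewrite inE eqxx. Qed.
Lemma VmemC : npolyp k.+1 'X^c \in Vsp F c k.
Proof. by apply: memv_span; rewrite !inE eqxx orbT. Qed.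
Lemma VmemK : npolyp k.+1 'X^k \in Vsp F c k.
Proof. by apply: memv_span; rewrite !inE eqxx !orbT. Qed.

Lemma glue (hck : (c <= k)%N) s : (s < k + a)%N -> Ssum a c k (hd W) s -> hd (prodsp (Vsp F c k) W) s.
Proof.
move=> hs /or3P [/andP [_ h]|/and3P [hc _ h]|/and3P [hk _ h]].
- move/pbP: h => [w wW sw].
  have := glue1 (al := 0) Vmem0 _ wW sw; rewrite add0n; apply => //.
  by rewrite valK ?size_poly1 // expr0.
- move/pbP: h => [w wW sw].
  have := glue1 (al := c) VmemC _ wW sw; rewrite subnKC //; apply => //.
  by rewrite valK // size_polyXn ltnS.
- move/pbP: h => [w wW sw].
  have := glue1 (al := k) VmemK _ wW sw; rewrite subnKC //; apply => //.
  by rewrite valK // size_polyXn.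
Qed.
End GL.

Theorem mainTheorem5 (F : closedFieldType) (hchar : [pchar F] =i pred0)
    (a b : nat) (ha : (0 < a)%N) (hb : (0 < b)%N)
    (hab : 1 < (b%:R / a%:R : rat)) (hb2 : (b%:R / a%:R : rat) <= 2)
    (W : {vspace {poly_a F}}) (hW : W != 0%VS) :
  let c := (a %% (b - a))%N in
  (b%:R / a%:R : rat) <= mu (Vsp F c (b - a)) W.
Proof.
change ((b%:R / a%:R : rat) <= mu (Vsp F (a %% (b - a))%N (b - a)) W).
set c := (a %% (b - a))%N.
have a0 : (0 : rat) < a%:R by rewrite ltr0n.
have hab' : (a < b)%N by move: hab; rewrite ltr_pdivlMr // mul1r ltr_nat.
have hb2' : (b <= 2 * a)%N by move: hb2; rewrite ler_pdivrMr // -natrM ler_nat mulnC.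
set k := (b - a)%N.
have hk : (0 < k)%N by rewrite subn_gt0.
have hka : (k <= a)%N by rewrite leq_subLR addnn -mul2n.
have bak : b = (a + k)%N by rewrite addnC subnK // ltnW.
have dW0 : (0 < \dim W)%N by rewrite lt0n dimv_eq0.
rewrite /mu ler_pdivrMr // mulrAC ler_pdivlMr ?ltr0n // -!natrM ler_nat.
set VW := prodsp (Vsp F c k) W.
have suppW : forall e, hd W e -> (e < a)%N.
  by move=> e /pbP [w _ sw]; have := size_npoly w; rewrite sw.
have h1 : (\dim W <= \sum_(e < a) hd W e)%N.
  by apply: L1 => u _; exact: size_npoly.
have h2 := comb hk hka suppW.
have h3 : (\sum_(s < a + k) Ssum a (a %% k) k (hd W) s <= \sum_(s < a + k) hd VW s)%N.
  apply: leq_sum => s _; apply: bimp; apply: glue.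
    by rewrite /c ltnW // ltn_pmod.
  by rewrite (addnC k a) ltn_ord.
have h4 := L2 (a + k) VW.
rewrite bak mulnC.
apply: leq_trans (leq_mul (leq_trans h1 (leqnn _)) (leqnn _)) _.
rewrite mulnC; apply: leq_trans h2 _.
by rewrite [X in (_ <= X)%N]mulnC leq_mul2l (leq_trans h3 h4) orbT.
Qed.
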